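(* Let $n\ge2$ and $0\le\delta<\frac1n$. Let $P^0=[d_1\ \cdots\ d_{n+1}]$ be the canonical uniform simplex in $\mathbb R^{n}$. Define the matrix $P^\delta$ with columns $[P^\delta]_1=d_1$ and $[P^\delta]_i=\alpha(d_i+\delta e_1)$ for $2\le i\le n+1$, where $\alpha=\frac{n}{\sqrt{n^2\delta^2-2n\delta+n^2}}$. Let $\mathcal P^\delta$ be the set of columns of $P^\delta$. Then $\mathcal P^\delta$ is a positive basis of $\mathbb R^n$ with cosine measure $\frac{1-\delta n}{\sqrt{n^2\delta^2-2n\delta+n^2}}$.
   Context: The canonical uniform simplex is the $n\times(n+1)$ matrix $P^0$ defined as follows, with $a_i=\sqrt{\frac{(n-i+1)(n+1)}{n(n-i+2)}}$ for $i=1,\dots,n$: for $1\le j\le n$, column $j$ has entry $-\frac{a_i}{n-i+1}$ in row $i<j$, entry $a_j$ in row $j$, and $0$ in rows $i>j$; column $n+1$ has entry $-\frac{a_i}{n-i+1}$ in every row $i$. $e_1$ is the first standard basis vector. A finite set $\mathcal P$ is a positive basis if its positive span $\{\sum\lambda_id_i:\lambda_i\ge0\}$ is $\mathbb R^n$ and no $d\in\mathcal P$ lies in the positive span of $\mathcal P\setminus\{d\}$. The cosine measure of a finite set $\mathcal S\subset\mathbb R^n\setminus\{\mathbf 0\}$ is $\operatorname{cm}(\mathcal S)=\min_{\|u\|=1}\max_{d\in\mathcal S}\frac{d^\top u}{\|d\|}$. *)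

(* Defs.v *)
From HB Require Import structures.
From mathcomp Require Import all_boot all_order all_algebra.
From mathcomp Require Import boolp classical_sets reals.
Set Implicit Arguments. Unset Strict Implicit. Unset Printing Implicit Defensive.
Import Order.TTheory GRing.Theory Num.Theory.
Local Open Scope ring_scope.
Local Open Scope classical_set_scope.

Section Defs.
Variable R : realType.

Definition dotv n (u v : 'cV[R]_n) : R := (u^T *m v) 0 0.
Definition normv n (u : 'cV[R]_n) : R := Num.sqrt (dotv u u).

(* positive span of a finite set of vectors (given as a list, read as a set) *)
Definition pspan n (s : seq 'cV[R]_n) : set 'cV[R]_n :=
  [set x | exists lam : 'I_(size s) -> R,
     (forall i, 0 <= lam i) /\ x = \sum_(i < size s) lam i *: s`_i].

Definition positive_basis n (s : seq 'cV[R]_n) : Prop :=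
  pspan s = setT /\
  forall d, d \in s -> ~ pspan [seq x <- s | x != d] d.

(* cosine measure  min_{|u|=1} max_{d in S} d^T u / |d| ; the inner max is over a
   finite set (a sup of a finite set), the outer min is taken as an infimum *)
Definition cosmeasure n (s : seq 'cV[R]_n) : R :=
  inf [set m | exists u : 'cV[R]_n, normv u = 1 /\
         m = sup [set c | exists2 d, d \in s & c = dotv d u / normv d]].

(* a_i, with 0-based row index i (paper's index i+1) *)
Definition simplex_a (n i : nat) : R :=
  Num.sqrt (((n%:R - i%:R) * (n%:R + 1)) / (n%:R * (n%:R - i%:R + 1))).

(* canonical uniform simplex P^0 (0-based indices; paper's column j+1, row i+1) *)
Definition P0 (n : nat) : 'M[R]_(n, n.+1) :=
  \matrix_(i < n, j < n.+1)
    if (j < n)%N then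
      (if (i < j)%N then - simplex_a n i / (n%:R - i%:R)
       else if (i == j :> nat) then simplex_a n j else 0)
    else - simplex_a n i / (n%:R - i%:R).

Definition e1 (n : nat) : 'cV[R]_n := \col_(i < n) ((i == 0 :> nat)%:R).

Definition alpha_delta (n : nat) (delta : R) : R :=
  n%:R / Num.sqrt (n%:R ^+ 2 * delta ^+ 2 - 2 * n%:R * delta + n%:R ^+ 2).

Definition Pdelta (n : nat) (delta : R) : 'M[R]_(n, n.+1) :=
  \matrix_(i < n, j < n.+1)
    if (j == 0 :> nat) then P0 n i j
    else alpha_delta n delta * (P0 n i j + delta * e1 n i 0).

Definition cols n m (M : 'M[R]_(n, m)) : seq 'cV[R]_n :=
  [seq col j M | j <- enum 'I_m].

End Defs.

(* Main.v *)
Require Import Defs.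
From HB Require Import structures.
From mathcomp Require Import all_boot all_order all_algebra.
From mathcomp Require Import boolp classical_sets reals.
From mathcomp Require Import ring lra.
Import Order.TTheory GRing.Theory Num.Theory.
Local Open Scope ring_scope.

Ltac nz := repeat (apply/andP; split); try (apply/lt0r_neq0; lra).

Lemma sum_if_col (R : realType) (N j : nat) (F : nat -> R) (Y : R) :
  (j <= N)%N ->
  \sum_(i < N) (if (i < j)%N then F i else if (i == j :> nat) then Y else 0)
  = \sum_(i < j) F i + (if (j < N)%N then Y else 0).
Proof.
elim: N => [|N IH] hj.
  by move: hj; rewrite leqn0 => /eqP ->; rewrite !big_ord0 addr0.
rewrite big_ord_recr /=.
case: (ltnP j N.+1) => [hlt|hge].
2:{ have -> : j = N.+1 by apply/eqP; rewrite eqn_leq hj hge.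
  rewrite addr0.
  rewrite [RHS]big_ord_recr /=; congr (_ + _).
  by apply: eq_bigr => i _; rewrite (ltn_trans (ltn_ord i) (ltnSn N)). }
rewrite IH; last exact: hlt.

case: (ltnP j N) => [hjN|hNj].
  by rewrite eq_sym (ltn_eqF hjN) addr0.
have ejN : j = N by apply/eqP; rewrite eqn_leq hNj -ltnS hlt.
by rewrite ejN eqxx addr0.
Qed.

Lemma sum_if_row (R : realType) (N k : nat) (X Y : R) :
  (k < N)%N ->
  \sum_(j < N) (if (k < j)%N then X else if (k == j :> nat) then Y else 0)
  = (N - k.+1)%:R * X + Y.
Proof.
elim: N => [|N IH] hk //.
rewrite big_ord_recr /=.
case: (ltnP k N) => [hlt|hge].
  rewrite IH // subSS -(subnSK hlt) mulrSr; ring.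
have ekN : k = N by apply/eqP; rewrite eqn_leq hge -ltnS hk.
rewrite ekN eqxx subnn mul0r add0r big1 ?add0r // => j _.
by rewrite ltnNge (ltnW (ltn_ord j)) /= eq_sym (ltn_eqF (ltn_ord j)).
Qed.

Lemma P0E (R : realType) n (i : 'I_n) (j : 'I_n.+1) :
  P0 R n i j = if (i < j)%N then - simplex_a R n i / (n%:R - i%:R)
               else if (i == j :> nat) then simplex_a R n i else 0.
Proof.
rewrite mxE; case: ifP => hj.
  case: (i < j)%N => //; case: eqP => [->|] //.
have hij : (i < j)%N.
  by apply: (leq_trans (ltn_ord i)); rewrite leqNgt hj.
by rewrite hij.
Qed.

Lemma dotvE (R : realType) n (u v : 'cV[R]_n) : dotv u v = \sum_i u i 0 * v i 0.
Proof. by rewrite /dotv mxE; apply: eq_bigr => i _; rewrite mxE. Qed.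

Lemma dotvC (R : realType) n (u v : 'cV[R]_n) : dotv u v = dotv v u.
Proof. by rewrite !dotvE; apply: eq_bigr => i _; rewrite mulrC. Qed.

Definition bsq (R : realType) n (m : nat) : R :=
  (simplex_a R n m / (n%:R - m%:R)) ^+ 2.

Lemma P0_prod (R : realType) n (i : 'I_n) (j k : 'I_n.+1) : (j <= k)%N ->
  P0 R n i j * P0 R n i k =
  if (i < j)%N then bsq R n i else if (i == j :> nat) then
    (if (j < k)%N then simplex_a R n j * (- simplex_a R n j / (n%:R - j%:R))
     else simplex_a R n j ^+ 2) else 0.
Proof.
move=> hjk; rewrite !P0E /bsq.
case: (ltnP i j) => hij.
  rewrite (leq_trans hij hjk); ring.
case: eqP => [eij|nij].
  rewrite -eij; case: (ltnP i k) => hik //.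
  have -> : (i == k :> nat) by rewrite eqn_leq hik eij hjk.
  by rewrite expr2.
by rewrite mul0r.
Qed.

Lemma nm_pos (R : realType) n m : (m < n)%N -> 0 < (n%:R - m%:R : R).
Proof. by move=> h; rewrite subr_gt0 ltr_nat. Qed.

Lemma a_sq (R : realType) n m : (m < n)%N ->
  simplex_a R n m ^+ 2 =
  ((n%:R - m%:R) * (n%:R + 1)) / (n%:R * (n%:R - m%:R + 1)).
Proof.
move=> h; have p := @nm_pos R _ _ h.
have n0 : (0 : R) < n%:R by rewrite ltr0n (leq_ltn_trans (leq0n m) h).
rewrite /simplex_a sqr_sqrtr // divr_ge0 // ?mulr_ge0 //; lra.
Qed.

Lemma bsq_val (R : realType) n m : (m < n)%N ->
  bsq R n m = (n%:R + 1) / (n%:R * (n%:R - m%:R) * (n%:R - m%:R + 1)).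
Proof.
move=> h; have p := @nm_pos R _ _ h.
have n0 : (0 : R) < n%:R by rewrite ltr0n (leq_ltn_trans (leq0n m) h).
rewrite /bsq expr_div_n a_sq //.
field; nz.
Qed.

Lemma S_val (R : realType) n j : (0 < n)%N -> (j <= n)%N ->
  \sum_(i < j) bsq R n i =
  (n%:R + 1) / n%:R * (1 / (n%:R - j%:R + 1) - 1 / (n%:R + 1)).
Proof.
move=> n0 ; have n0' : (0 : R) < n%:R by rewrite ltr0n.
elim: j => [|j IH] hj.
  rewrite big_ord0 subr0; field; nz.
rewrite big_ord_recr /= IH ?(ltnW hj) // bsq_val //.
have p := @nm_pos R _ _ hj.
rewrite -addn1 natrD.
field; nz.
Qed.

Lemma colE (R : Type) m n (M : 'M[R]_(m, n)) j i : col j M i 0 = M i j.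
Proof. by rewrite mxE. Qed.

Lemma col_dot (R : realType) n (j k : 'I_n.+1) : (0 < n)%N ->
  dotv (col j (P0 R n)) (col k (P0 R n)) = if j == k then 1 else - 1 / n%:R.
Proof.
move=> n0; have n0' : (0 : R) < n%:R by rewrite ltr0n.
wlog hjk : j k / (j <= k)%N.
  move=> H; case: (leqP j k) => h; first exact: H.
  by rewrite dotvC eq_sym; apply: H; apply: ltnW.
rewrite dotvE.
under eq_bigr do rewrite !colE.
rewrite (eq_bigr _ (fun i _ => @P0_prod R n i j k hjk)).
rewrite (@sum_if_col R n j (bsq R n)); last by rewrite -ltnS.
rewrite S_val //; last by rewrite -ltnS.
case: (ltnP j n) => hjn.
  have p := @nm_pos R _ _ hjn.
  case: (ltnP j k) => hk.
    have -> : (j == k) = false by apply/eqP => e; rewrite e ltnn in hk.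
    rewrite (_ : simplex_a R n j * _ = - (simplex_a R n j ^+ 2) / (n%:R - j%:R)); last by ring.
    rewrite a_sq //; field; nz.
  have -> : j == k by apply/eqP/val_inj/eqP; rewrite eqn_leq hjk hk.
  rewrite a_sq //; field; nz.
have ejn : (j : nat) = n by apply/eqP; rewrite eqn_leq hjn -ltnS ltn_ord.
have -> : j == k.
  by apply/eqP/val_inj/eqP; rewrite eqn_leq hjk /= ejn -ltnS ltn_ord.
rewrite ejn subrr add0r addr0; field; nz.
Qed.

Lemma P0_rprod (R : realType) n (i k : 'I_n) (j : 'I_n.+1) : (i <= k)%N ->
  P0 R n i j * P0 R n k j =
  if (k < j)%N then (simplex_a R n i / (n%:R - i%:R)) * (simplex_a R n k / (n%:R - k%:R))
  else if (k == j :> nat) then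
    (if (i < k)%N then (- simplex_a R n i / (n%:R - i%:R)) * simplex_a R n k
     else simplex_a R n i ^+ 2) else 0.
Proof.
move=> hik; rewrite !P0E.
case: (ltnP k j) => hkj.
  rewrite (leq_ltn_trans hik hkj); ring.
have [ekj|nkj] := eqVneq (k : nat) (j : nat); last by rewrite mulr0.
rewrite -ekj; case: (ltnP i k) => h //.
have eik : (i : nat) = k by apply/eqP; rewrite eqn_leq hik h.
by rewrite eik eqxx expr2.
Qed.

Lemma row_dot (R : realType) n (i k : 'I_n) :
  \sum_j P0 R n i j * P0 R n k j = if i == k then (n%:R + 1) / n%:R else 0.
Proof.
wlog hik : i k / (i <= k)%N.
  move=> H; case: (leqP i k) => h; first exact: H.
  rewrite eq_sym -H; last exact: ltnW.
  by apply: eq_bigr => j _; rewrite mulrC.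
have n0 : (0 < n)%N by apply: leq_ltn_trans (leq0n i) (ltn_ord i).
have n0' : (0 : R) < n%:R by rewrite ltr0n.
rewrite (eq_bigr _ (fun j _ => @P0_rprod R n i k j hik)).
rewrite sum_if_row; last by rewrite ltnS; apply: ltnW.
rewrite subSS natrB; last by apply: ltnW.
have pk := @nm_pos R _ _ (ltn_ord k).
have pi := @nm_pos R _ _ (ltn_ord i).
case: (ltnP i k) => h.
  have -> : (i == k) = false by apply/eqP => e; rewrite e ltnn in h.
  field; nz.
have -> : i == k by apply/eqP/val_inj/eqP; rewrite eqn_leq hik h.
have eik : (i : nat) = k by apply/eqP; rewrite eqn_leq hik h.
rewrite -eik.
rewrite (_ : (simplex_a R n i / (n%:R - i%:R)) * (simplex_a R n i / (n%:R - i%:R))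
   = simplex_a R n i ^+ 2 / (n%:R - i%:R) ^+ 2); last by rewrite -expr2 expr_div_n.
rewrite a_sq //; field; nz.
Qed.

Lemma row_sum (R : realType) n (i : 'I_n) : \sum_j P0 R n i j = 0.
Proof.
have pi := @nm_pos R _ _ (ltn_ord i).
under eq_bigr do rewrite P0E.
rewrite sum_if_row; last by rewrite ltnS; apply: ltnW.
rewrite subSS natrB; last by apply: ltnW.
field; nz.
Qed.

Lemma PPt (R : realType) n : (0 < n)%N ->
  P0 R n *m (P0 R n)^T = ((n%:R + 1) / n%:R)%:M.
Proof.
move=> n0; apply/matrixP => i k; rewrite [LHS]mxE [RHS]mxE.
under eq_bigr do rewrite [(P0 R n)^T _ _]mxE.
rewrite row_dot; by case: eqP.
Qed.

Lemma dotv_PT (R : realType) n (u : 'cV[R]_n) j :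
  dotv (col j (P0 R n)) u = ((P0 R n)^T *m u) j 0.
Proof. by rewrite dotvE mxE; apply: eq_bigr => i _; rewrite !mxE. Qed.

Lemma mulmx_cols (R : realType) n m (M : 'M[R]_(n, m)) (v : 'cV[R]_m) :
  M *m v = \sum_j v j 0 *: col j M.
Proof.
apply/matrixP => i z; rewrite (ord1 z) !mxE summxE.
by apply: eq_bigr => j _; rewrite !mxE mulrC.
Qed.

Lemma frame_sq (R : realType) n (u : 'cV[R]_n) : (0 < n)%N ->
  \sum_j dotv (col j (P0 R n)) u ^+ 2 = (n%:R + 1) / n%:R * dotv u u.
Proof.
move=> n0.
have -> : \sum_j dotv (col j (P0 R n)) u ^+ 2 = dotv ((P0 R n)^T *m u) ((P0 R n)^T *m u).
  by rewrite dotvE; apply: eq_bigr => j _; rewrite dotv_PT expr2.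
rewrite /dotv trmx_mul trmxK mulmxA -(mulmxA u^T) PPt // mul_mx_scalar.
by rewrite -scalemxAl mxE.
Qed.

Lemma frame_rep (R : realType) n (u : 'cV[R]_n) : (0 < n)%N ->
  u = \sum_j (n%:R / (n%:R + 1) * dotv (col j (P0 R n)) u) *: col j (P0 R n).
Proof.
move=> n0; have n0' : (0 : R) < n%:R by rewrite ltr0n.
have e : u = (n%:R / (n%:R + 1)) *: (P0 R n *m ((P0 R n)^T *m u)).
  rewrite mulmxA PPt // mul_scalar_mx scalerA.
  rewrite (_ : _ * _ = 1) ?scale1r //; field; nz.
rewrite {1}e mulmx_cols scaler_sumr; apply: eq_bigr => j _.
by rewrite scalerA dotv_PT.
Qed.

Lemma sum_x (R : realType) n (u : 'cV[R]_n) :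
  \sum_j dotv (col j (P0 R n)) u = 0.
Proof.
under eq_bigr do rewrite dotvE.
rewrite exchange_big /= big1 // => i _.
rewrite -mulr_suml; under eq_bigr do rewrite mxE.
by rewrite row_sum mul0r.
Qed.

Lemma dotvDl (R : realType) n (u v w : 'cV[R]_n) : dotv (u + v) w = dotv u w + dotv v w.
Proof. by rewrite !dotvE -big_split; apply: eq_bigr => i _; rewrite !mxE mulrDl. Qed.

Lemma dotvZl (R : realType) n a (u w : 'cV[R]_n) : dotv (a *: u) w = a * dotv u w.
Proof. by rewrite !dotvE mulr_sumr; apply: eq_bigr => i _; rewrite !mxE mulrA. Qed.

Lemma dotv_suml (R : realType) n m (F : 'I_m -> 'cV[R]_n) w :
  dotv (\sum_j F j) w = \sum_j dotv (F j) w.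
Proof.
rewrite dotvE; under eq_bigr do rewrite summxE mulr_suml.
by rewrite exchange_big; apply: eq_bigr => j _; rewrite dotvE.
Qed.

Lemma a0_one (R : realType) n : (0 < n)%N -> simplex_a R n 0 = 1.
Proof.
move=> n0; have n0' : (0 : R) < n%:R by rewrite ltr0n.
rewrite /simplex_a subr0 divff ?sqrtr1 //; apply/lt0r_neq0/mulr_gt0; lra.
Qed.

Lemma e1_col (R : realType) n : (0 < n)%N -> e1 R n = col ord0 (P0 R n).
Proof.
move=> n0; apply/matrixP => i z; rewrite (ord1 z) !colE P0E mxE /=.
by case: eqP => [->|]; rewrite ?a0_one.
Qed.

Definition Qd (R : realType) n (delta : R) :=
  n%:R ^+ 2 * delta ^+ 2 - 2 * n%:R * delta + n%:R ^+ 2.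

Lemma Pd_col (R : realType) n (delta : R) (j : 'I_n.+1) : (0 < n)%N ->
  col j (Pdelta n delta) =
  if j == ord0 then col ord0 (P0 R n)
  else alpha_delta n delta *: (col j (P0 R n) + delta *: col ord0 (P0 R n)).
Proof.
move=> n0; rewrite -e1_col //.
have [->|nj] := eqVneq j ord0; apply/matrixP => i z; rewrite (ord1 z) !colE.
  by rewrite [LHS]mxE /= e1_col // colE.
rewrite [LHS]mxE.
have -> : (j == 0 :> nat) = false by exact: negbTE nj.
by rewrite !mxE.
Qed.

Lemma Pd_dot (R : realType) n (delta : R) (j : 'I_n.+1) u : (0 < n)%N ->
  dotv (col j (Pdelta n delta)) u =
  if j == ord0 then dotv (col ord0 (P0 R n)) u
  else alpha_delta n delta * (dotv (col j (P0 R n)) u + delta * dotv (col ord0 (P0 R n)) u).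
Proof.
move=> n0; rewrite Pd_col //; case: eqP => // _.
by rewrite dotvZl dotvDl dotvZl.
Qed.

Lemma final_contra (R : realType) (N d x W : R) :
  2 <= N -> 0 <= d -> N * d < 1 -> x < 1 / N -> 0 < W ->
  W = N * (1 / N - d) + x * (1 - N * d) ->
  (N + 1) / N <= x ^+ 2 + N * ((1 / N - d) - d * x) ^+ 2
                 - 2 * ((1 / N - d) - d * x) * W + W ^+ 2 ->
  False.
Proof.
move=> hN hd hNd hx hW eW hle.
have N0 : 0 < N by lra.
set s := 1 / N - d in eW hle.
have eNs : N * s = 1 - N * d by rewrite /s; field; nz.
have hs0 : 0 < s.
  have h : 0 < N * s by lra.
  by rewrite pmulr_rgt0 in h.
have eW' : W = N * s * (1 + x) by rewrite eW -eNs; ring.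
have hx1 : 0 < 1 + x.
  by move: hW; rewrite eW' pmulr_rgt0 // mulr_gt0.
have ident : x ^+ 2 + N * (s - d * x) ^+ 2 - 2 * (s - d * x) * W + W ^+ 2 - (N + 1) / N
   = (1 + x) * ((N + 1) / N * (x - 1) + N * (N - 1) * s ^+ 2 * (1 + x)).
  rewrite eW' (_ : d = 1 / N - s); last by rewrite /s; ring.
  field; nz.
have hNd0 : 0 <= N * d by apply: mulr_ge0; lra.
have hNs : N * s <= 1 by lra.
have h2 : N * s ^+ 2 <= s.
  by rewrite expr2 mulrA -[X in _ <= X]mul1r; apply: ler_wpM2r; lra.
have hsN : s * N <= 1 by lra.
have h1 : N * (N - 1) * s ^+ 2 * (1 + x) <= (N - 1) / N * (1 + x).
  apply: ler_wpM2r; first lra.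
  rewrite mulrAC; apply: (@le_trans _ _ (s * (N - 1))).
    by apply: ler_wpM2r; lra.
  have -> : (N - 1) / N = 1 / N * (N - 1) by field; nz.
  apply: ler_wpM2r; first lra.
  rewrite -(ler_pM2l N0).
  have -> : N * (1 / N) = 1 by field; nz.
  exact: hNs.
have h3 : (N + 1) / N * (x - 1) + (N - 1) / N * (1 + x) = 2 * x - 2 / N.
  field; nz.
have h5 : 2 / N = 2 * (1 / N) by field; nz.
have h4 : (N + 1) / N * (x - 1) + N * (N - 1) * s ^+ 2 * (1 + x) < 0.
  move: h1 h3 h5 hx.
  set A := (N + 1) / N * (x - 1); set B := N * (N - 1) * s ^+ 2 * (1 + x).
  set C := (N - 1) / N * (1 + x); set D := 2 / N; set E := 1 / N.
  lra.
have : (1 + x) * ((N + 1) / N * (x - 1) + N * (N - 1) * s ^+ 2 * (1 + x)) < 0.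
  by rewrite pmulr_rlt0.
lra.
Qed.

Lemma key_exists (R : realType) n (d : R) (x : 'I_n.+1 -> R) (al ga : R) :
  (2 <= n)%N -> 0 <= d -> n%:R * d < 1 -> 0 < al ->
  ga = al * (1 / n%:R - d) -> ga <= 1 / n%:R ->
  \sum_j x j = 0 -> \sum_j x j ^+ 2 = (n%:R + 1) / n%:R ->
  exists j, ga <= (if j == ord0 then x ord0 else al * (x j + d * x ord0)).
Proof.
move=> n2 hd hnd hal ega hga sx sx2.
set f := fun j : 'I_n.+1 => if j == ord0 then x ord0 else al * (x j + d * x ord0).
case: (boolP [exists j, ga <= f j]) => [/existsP [j hj] | /existsPn H].
  by exists j.
exfalso.
have H' : forall j, f j < ga by move=> j; rewrite ltNge; exact: H j.
have n0 : (0 < n)%N by apply: leq_trans n2.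
have N2 : (2 : R) <= n%:R by rewrite (ler_nat R 2 n).
have N0 : (0 : R) < n%:R by lra.
set s := 1 / n%:R - d.
have hx0 : x ord0 < ga by have := H' ord0; rewrite /f eqxx.
set w := fun i : 'I_n => s - x (lift ord0 i) - d * x ord0.
have hw : forall i, 0 < w i.
  move=> i; have := H' (lift ord0 i); rewrite /f.
  have -> : (lift ord0 i == ord0) = false by apply: negbTE; rewrite eq_sym; exact: neq_lift.
  rewrite ega ltr_pM2l // /w /= => h; rewrite /s; lra.
set W := \sum_i w i.
rewrite big_ord_recl in sx; rewrite big_ord_recl in sx2.
have eW : W = n%:R * s - \sum_i x (lift ord0 i) - n%:R * (d * x ord0).
  rewrite /W /w !sumrB !sumr_const card_ord !mulr_natl /s mulrnBl.
  done.
have hwW : forall i, w i <= W.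
  move=> i; rewrite /W (bigD1 i) //= lerDl; apply: sumr_ge0 => k _.
  exact: ltW.
have hW0 : 0 < W by apply: lt_le_trans (hw (Ordinal n0)) (hwW _).
have hw2 : \sum_i w i ^+ 2 <= W ^+ 2.
  rewrite [W ^+ 2]expr2 {2}/W mulr_suml; apply: ler_sum => i _.
  rewrite expr2; apply: ler_wpM2l; [exact: ltW | exact: hwW].
have ex2 : \sum_i x (lift ord0 i) ^+ 2 =
    n%:R * (s - d * x ord0) ^+ 2 - 2 * (s - d * x ord0) * W + \sum_i w i ^+ 2.
  have -> : \sum_i x (lift ord0 i) ^+ 2 =
      \sum_i ((s - d * x ord0) ^+ 2 - 2 * (s - d * x ord0) * w i + w i ^+ 2).
    by apply: eq_bigr => i _; rewrite /w; ring.
  rewrite big_split sumrB /= sumr_const card_ord mulr_natl -mulr_sumr.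
  by rewrite mulr_natl.
apply: (@final_contra R n%:R d (x ord0) W).
- exact: N2.
- exact: hd.
- exact: hnd.
- exact: lt_le_trans hx0 hga.
- exact: hW0.
- rewrite eW; rewrite -/s.
  have -> : \sum_i x (lift ord0 i) = - x ord0 by lra.
  ring.
- rewrite -sx2 ex2 -/s; lra.
Qed.

Lemma size_cols (R : realType) n m (M : 'M[R]_(n, m)) : size (cols M) = m.
Proof. by rewrite /cols size_map size_enum_ord. Qed.

Lemma nth_cols (R : realType) n m (M : 'M[R]_(n, m)) (j : 'I_m) :
  (cols M)`_j = col j M.
Proof.
rewrite /cols (nth_map j); last by rewrite size_enum_ord.
by rewrite nth_ord_enum.
Qed.

Lemma mem_cols (R : realType) n m (M : 'M[R]_(n, m)) y :
  y \in cols M -> exists j, y = col j M.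
Proof. by case/mapP => j _ ->; exists j. Qed.

Lemma col_in_cols (R : realType) n m (M : 'M[R]_(n, m)) j : col j M \in cols M.
Proof. by apply/mapP; exists j => //; rewrite mem_enum. Qed.

Lemma pspan_cols (R : realType) n m (M : 'M[R]_(n, m)) x (lam : 'I_m -> R) :
  (forall j, 0 <= lam j) -> x = \sum_j lam j *: col j M -> pspan (cols M) x.
Proof.
move=> hl ->.
have e := size_cols _ _ _ M.
exists (fun i => lam (cast_ord e i)); split => [i|]; first exact: hl.
move: (cols M) e (nth_cols _ _ _ M) => s e hs.
subst m; apply: eq_bigr => i _; by rewrite cast_ord_id hs.
Qed.

Lemma pspan_dot (R : realType) n (s : seq 'cV[R]_n) x u :
  pspan s x -> (forall y, y \in s -> dotv y u <= 0) -> dotv x u <= 0.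
Proof.
move=> [lam [hl ->]] hy.
rewrite dotv_suml; apply: sumr_le0 => i _.
rewrite dotvZl; apply: mulr_ge0_le0 => //; apply: hy.
by apply: mem_nth.
Qed.

Lemma scal (R : realType) n (d : R) : (2 <= n)%N -> 0 <= d -> d < 1 / n%:R ->
  [/\ n%:R * d < 1, 0 < Qd R n d, 0 < alpha_delta n d,
      alpha_delta n d ^+ 2 * (1 - 2 * d / n%:R + d ^+ 2) = 1 &
      (1 - d * n%:R) / Num.sqrt (Qd R n d) = alpha_delta n d * (1 / n%:R - d)].
Proof.
move=> n2 hd hdn.
have N2 : (2 : R) <= n%:R by rewrite (ler_nat R 2 n).
have N0 : (0 : R) < n%:R by lra.
have hnd : n%:R * d < 1.
  have h1 : n%:R * d < n%:R * (1 / n%:R) by rewrite ltr_pM2l.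
  have e : n%:R * (1 / n%:R) = 1 :> R by field; nz.
  lra.
have hnd0 : 0 <= n%:R * d by apply: mulr_ge0; lra.
have hQ : 0 < Qd R n d.
  rewrite /Qd.
  have -> : n%:R ^+ 2 * d ^+ 2 - 2 * n%:R * d + n%:R ^+ 2 =
            (n%:R * d - 1) ^+ 2 + (n%:R ^+ 2 - 1) by ring.
  have : 1 < n%:R ^+ 2 :> R by rewrite expr2; nra.
  have := sqr_ge0 (n%:R * d - 1); lra.
have hs : 0 < Num.sqrt (Qd R n d) by rewrite sqrtr_gt0.
have hsq := sqr_sqrtr (ltW hQ).
split => //.
- by rewrite /alpha_delta divr_gt0.
- rewrite /alpha_delta -/(Qd R n d) expr_div_n hsq /Qd; field; nz.
  apply/lt0r_neq0; move: hQ; rewrite /Qd; lra.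
- by rewrite /alpha_delta -/(Qd R n d); field; nz.
Qed.

Lemma ga_le (R : realType) n (d : R) : (2 <= n)%N -> 0 <= d -> d < 1 / n%:R ->
  (1 - d * n%:R) / Num.sqrt (Qd R n d) <= 1 / n%:R.
Proof.
move=> n2 hd hdn; case: (@scal R n d n2 hd hdn) => hnd hQ _ _ _.
have N2 : (2 : R) <= n%:R by rewrite (ler_nat R 2 n).
have N0 : (0 : R) < n%:R by lra.
have hs : 0 < Num.sqrt (Qd R n d) by rewrite sqrtr_gt0.
suff key : n%:R * (1 - d * n%:R) <= Num.sqrt (Qd R n d).
  rewrite ler_pdivrMr //.
  have h1 : 1 / n%:R * (n%:R * (1 - d * n%:R)) <= 1 / n%:R * Num.sqrt (Qd R n d).
    by apply: ler_wpM2l => //; apply: divr_ge0; lra.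
  have e : 1 / n%:R * (n%:R * (1 - d * n%:R)) = 1 - d * n%:R by field; nz.
  lra.
have h0 : 0 <= n%:R * (1 - d * n%:R) by apply: mulr_ge0; lra.
rewrite -(ger0_norm h0) -sqrtr_sqr; apply: ler_wsqrtr.
rewrite /Qd.
have e : (n%:R * (1 - d * n%:R)) ^+ 2 = n%:R ^+ 2 - 2 * n%:R * (n%:R * d) * n%:R + (n%:R * d) ^+ 2 * n%:R ^+ 2 by ring.
rewrite e.
have e2 : n%:R ^+ 2 * d ^+ 2 = (n%:R * d) ^+ 2 by ring.
rewrite e2.
have ht0 : 0 <= n%:R * d by apply: mulr_ge0; lra.
have h : 0 <= ((n%:R - 1) * (n%:R * d)) * (2 * n%:R - (n%:R + 1) * (n%:R * d)).
  apply: mulr_ge0; first by apply: mulr_ge0; lra.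
  have : 0 <= (n%:R + 1) * (1 - n%:R * d) by apply: mulr_ge0; lra.
  lra.
nra.
Qed.

Lemma Pd_norm (R : realType) n (d : R) (j : 'I_n.+1) :
  (2 <= n)%N -> 0 <= d -> d < 1 / n%:R ->
  normv (col j (Pdelta n d)) = 1.
Proof.
move=> n2 hd hdn; case: (@scal R n d n2 hd hdn) => hnd hQ hal hal2 _.
have n0 : (0 < n)%N by apply: leq_trans n2.
have N0 : (0 : R) < n%:R by rewrite ltr0n.
rewrite /normv -sqrtr1; congr Num.sqrt.
rewrite {1}Pd_dot //; case: eqP => [->|nj].
  by rewrite Pd_col // eqxx col_dot // eqxx.
rewrite (dotvC _ _ (col j (P0 R n))) (dotvC _ _ (col ord0 (P0 R n))) !Pd_dot //.
have fj : (j == ord0) = false by apply/eqP.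
have f0j : (ord0 == j) = false by apply/eqP => e; apply: nj.
rewrite fj !col_dot // !eqxx fj f0j; apply: etrans hal2; field; nz.
Qed.

Lemma aux_dn (R : realType) (d N : R) : 0 <= d -> 1 <= N -> - d <= d * (-1 / N) <= 0.
Proof.
move=> hd hN; have N0 : 0 < N by lra.
have h1 : 0 <= 1 / N by apply: divr_ge0; lra.
have h2 : 1 / N <= 1 by rewrite ler_pdivrMr // mul1r.
have e : d * (-1 / N) = - (d * (1 / N)) by rewrite mulNr mulrN.
rewrite e; apply/andP; split.
  by rewrite lerN2 -{2}(mulr1 d); apply: ler_wpM2l.
by rewrite oppr_le0; apply: mulr_ge0.
Qed.

Lemma Pd_indep (R : realType) n (d : R) :
  (2 <= n)%N -> 0 <= d -> d < 1 / n%:R ->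
  forall y, y \in cols (Pdelta n d) ->
    ~ pspan [seq x <- cols (Pdelta n d) | x != y] y.
Proof.
move=> n2 hd hdn y /mem_cols [k ->] hsp.
case: (@scal R n d n2 hd hdn) => hnd hQ hal hal2 _.
have n0 : (0 < n)%N by apply: leq_trans n2.
have N2 : (2 : R) <= n%:R by rewrite (ler_nat R 2 n).
have N0 : (0 : R) < n%:R by lra.
have [h1 h2] := andP (@aux_dn R d n%:R hd ltac:(lra)).
have hn1 : 0 < 1 / n%:R :> R by rewrite divr_gt0 // ltr01.
have hn1' : -1 / n%:R = - (1 / n%:R) :> R by rewrite mulNr.
have hn2 : 1 / n%:R <= 1 :> R by rewrite ler_pdivrMr // mul1r; lra.
suff [u [pos neg]] : exists u, 0 < dotv (col k (Pdelta n d)) u /\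
    forall j, j != k -> dotv (col j (Pdelta n d)) u <= 0.
  have H : forall y, y \in [seq x <- cols (Pdelta n d) | x != col k (Pdelta n d)] ->
      dotv y u <= 0.
    move=> z; rewrite mem_filter => /andP [nz /mem_cols [j ej]].
    rewrite ej in nz *; apply: neg; apply/eqP => ejk; by rewrite ejk eqxx in nz.
  have := @pspan_dot R n _ _ u hsp H; lra.
have [ek|nk] := eqVneq k ord0.
  subst k; exists (col ord0 (P0 R n)); split.
    by rewrite Pd_dot // eqxx col_dot // eqxx.
  move=> j nj; rewrite Pd_dot // (negbTE nj) !col_dot // (negbTE nj) eqxx.
  apply: mulr_ge0_le0; lra.
exists (col k (P0 R n)); split.
  rewrite Pd_dot // (negbTE nk) !col_dot // eqxx.
  have -> : (ord0 == k) = false by rewrite eq_sym; apply: negbTE.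
  apply: mulr_gt0 => //; lra.
move=> j nj; rewrite Pd_dot //.
have f0k : (ord0 == k) = false by rewrite eq_sym; apply: negbTE.
have [ej|nj0] := eqVneq j ord0.
  rewrite col_dot // f0k; lra.
rewrite !col_dot // (negbTE nj) f0k.
apply: mulr_ge0_le0; lra.
Qed.


Lemma le_sum1 (R : realType) m (F : 'I_m -> R) j :
  (forall k, 0 <= F k) -> F j <= \sum_k F k.
Proof.
move=> h; rewrite (bigD1 j) //= lerDl; apply: sumr_ge0 => k _; exact: h.
Qed.

Lemma pos_comb (R : realType) n m (c : 'I_m -> 'cV[R]_n) (nu w : 'I_m -> R) x :
  (forall j, 0 < w j) -> \sum_j w j *: c j = 0 -> x = \sum_j nu j *: c j ->
  exists lam : 'I_m -> R, (forall j, 0 <= lam j) /\ x = \sum_j lam j *: c j.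
Proof.
move=> hw h0 hx.
set t := (\sum_k `|nu k|) * (\sum_k (w k)^-1).
exists (fun j => nu j + t * w j); split.
  move=> j.
  have h1 : `|nu j| <= \sum_k `|nu k| by apply: (@le_sum1 R m (fun k => `|nu k|)).
  have h2 : (w j)^-1 <= \sum_k (w k)^-1.
    apply: (@le_sum1 R m (fun k => (w k)^-1)) => k; apply/ltW; rewrite invr_gt0; exact: hw.
  have h3 : 0 <= \sum_k `|nu k| by apply: sumr_ge0.
  have h4 : \sum_k `|nu k| <= t * w j.
    rewrite /t -mulrA; rewrite -{1}(mulr1 (\sum_k `|nu k|)).
    apply: ler_wpM2l => //.
    have -> : 1 = (w j)^-1 * w j by rewrite mulVf //; apply/lt0r_neq0.
    by apply: ler_wpM2r => //; apply: ltW.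
  have := ler_norm (- nu j); rewrite normrN.
  lra.
under eq_bigr do rewrite scalerDl.
rewrite big_split /= -hx.
under eq_bigr do rewrite -scalerA.
by rewrite -scaler_sumr h0 scaler0 addr0.
Qed.

Lemma sum_cols0 (R : realType) n : \sum_j col j (P0 R n) = 0.
Proof.
apply/matrixP => i z; rewrite summxE [RHS]mxE (ord1 z).
under eq_bigr do rewrite colE.
exact: row_sum.
Qed.

Lemma lift0_neq n (i : 'I_n) : (lift ord0 i == ord0) = false.
Proof. by apply/negbTE; rewrite eq_sym neq_lift. Qed.

Lemma Pd_zero (R : realType) n (d : R) : (0 < n)%N ->
  \sum_j (if j == ord0 then alpha_delta n d * (1 - n%:R * d) else 1)
     *: col j (Pdelta n d) = 0.
Proof.
move=> n0.
rewrite big_ord_recl eqxx Pd_col // eqxx.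
under eq_bigr => i _ do rewrite lift0_neq Pd_col // lift0_neq scale1r.
rewrite -scaler_sumr big_split /= sumr_const card_ord.
have := sum_cols0 R n; rewrite big_ord_recl => /eqP; rewrite addr_eq0 => /eqP ->.
set S := \sum_(i < n) _.
rewrite scalerMnl.
apply/matrixP => i z; rewrite !mxE.
rewrite -mulr_natl; ring.
Qed.

Lemma d_rep (R : realType) n (d : R) (j : 'I_n.+1) : (0 < n)%N ->
  alpha_delta n d != 0 ->
  col j (P0 R n) = (if j == ord0 then 1 else (alpha_delta n d)^-1) *: col j (Pdelta n d)
                   + (if j == ord0 then 0 else - d) *: col ord0 (Pdelta n d).
Proof.
move=> n0 ha; rewrite !Pd_col // eqxx.
case: eqP => [->|_]; first by rewrite scale1r scale0r addr0.
by rewrite scalerA mulVf // scale1r scaleNr addrK.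
Qed.

Lemma Pd_span (R : realType) n (d : R) :
  (2 <= n)%N -> 0 <= d -> d < 1 / n%:R -> pspan (cols (Pdelta n d)) = setT.
Proof.
move=> n2 hd hdn; case: (@scal R n d n2 hd hdn) => hnd hQ hal hal2 _.
have n0 : (0 < n)%N by apply: leq_trans n2.
apply/seteqP; split => x _ //.
set mu := fun j : 'I_n.+1 => n%:R / (n%:R + 1) * dotv (col j (P0 R n)) x.
set a := fun j : 'I_n.+1 => if j == ord0 then 1 else (alpha_delta n d)^-1.
set b := fun j : 'I_n.+1 => if j == ord0 then 0 else - d.
set K := \sum_j mu j * b j.
have hx1 : x = \sum_j mu j *: col j (P0 R n) by exact: frame_rep.
have hx : x = \sum_j (mu j * a j + (if j == ord0 then K else 0)) *: col j (Pdelta n d).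
  rewrite {1}hx1.
  under eq_bigr => j _ do rewrite (@d_rep R n d j n0 (lt0r_neq0 hal)) scalerDr !scalerA.
  rewrite big_split /= -scaler_suml.
  under [RHS]eq_bigr => j _ do rewrite scalerDl.
  rewrite [RHS]big_split /=; congr (_ + _).
  rewrite [RHS](bigD1 ord0) //= ?eqxx [in RHS]big1 ?addr0 // => j nj.
  by rewrite (negbTE nj) scale0r.
have hw : forall j : 'I_n.+1, 0 < (if j == ord0 then alpha_delta n d * (1 - n%:R * d) else 1).
  move=> j; case: eqP => _ //; apply: mulr_gt0 => //; lra.
have [lam [hl hlam]] := @pos_comb R n n.+1 (fun j => col j (Pdelta n d)) _ _ x hw (@Pd_zero R n d n0) hx.
exact: (@pspan_cols R n n.+1 (Pdelta n d) x lam hl hlam).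
Qed.

Local Open Scope classical_set_scope.

Lemma dotvNl (R : realType) n (u w : 'cV[R]_n) : dotv (- u) w = - dotv u w.
Proof. by rewrite -scaleN1r dotvZl mulN1r. Qed.

Lemma dotv_ge0 (R : realType) n (u : 'cV[R]_n) : 0 <= dotv u u.
Proof. by rewrite dotvE; apply: sumr_ge0 => i _; rewrite -expr2 sqr_ge0. Qed.

Lemma Pd_S (R : realType) n (d : R) u c :
  (2 <= n)%N -> 0 <= d -> d < 1 / n%:R ->
  (exists2 y, y \in cols (Pdelta n d) & c = dotv y u / normv y) <->
  (exists j, c = dotv (col j (Pdelta n d)) u).
Proof.
move=> n2 hd hdn; split.
  by case=> y /mem_cols [j ->] ->; exists j; rewrite Pd_norm // divr1.
by case=> j ->; exists (col j (Pdelta n d)); rewrite ?col_in_cols // Pd_norm // divr1.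
Qed.

Lemma Pd_hassup (R : realType) n (d : R) u :
  (2 <= n)%N -> 0 <= d -> d < 1 / n%:R ->
  has_sup [set c | exists2 y, y \in cols (Pdelta n d) & c = dotv y u / normv y].
Proof.
move=> n2 hd hdn; split.
  exists (dotv (col ord0 (Pdelta n d)) u); apply/(Pd_S _ _ _ _ _ n2 hd hdn); by exists ord0.
exists (\sum_j `|dotv (col j (Pdelta n d)) u|) => c /(Pd_S _ _ _ _ _ n2 hd hdn) [j ->].
apply: le_trans (ler_norm _) _.
by apply: (@le_sum1 R n.+1 (fun j => `|dotv (col j (Pdelta n d)) u|)).
Qed.

Lemma Pd_cm (R : realType) n (d : R) :
  (2 <= n)%N -> 0 <= d -> d < 1 / n%:R ->
  cosmeasure (cols (Pdelta n d)) = (1 - d * n%:R) / Num.sqrt (Qd R n d).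
Proof.
move=> n2 hd hdn; case: (@scal R n d n2 hd hdn) => hnd hQ hal hal2 ega.
have n0 : (0 < n)%N by apply: leq_trans n2.
have N2 : (2 : R) <= n%:R by rewrite (ler_nat R 2 n).
have N0 : (0 : R) < n%:R by lra.
have hga := @ga_le R n d n2 hd hdn.
set ga := (1 - d * n%:R) / Num.sqrt (Qd R n d) in ega hga *.
set S := fun u => [set c | exists2 y, y \in cols (Pdelta n d) & c = dotv y u / normv y].
have lower : forall u, normv u = 1 -> ga <= sup (S u).
  move=> u hu.
  have huu : dotv u u = 1.
    by rewrite -(sqr_sqrtr (dotv_ge0 _ _ u)) -/(normv u) hu expr1n.
  have sx2 : \sum_j dotv (col j (P0 R n)) u ^+ 2 = (n%:R + 1) / n%:R.
    by rewrite frame_sq // huu mulr1.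
  have [j hj] := @key_exists R n d (fun j => dotv (col j (P0 R n)) u) _ _ n2 hd hnd hal
    ega hga (sum_x _ _ u) sx2.
  apply: le_trans hj _.
  apply: sup_upper_bound; first exact: Pd_hassup.
  rewrite /S /=; apply/(Pd_S _ _ _ _ _ n2 hd hdn); exists j.
  by rewrite Pd_dot.
set u0 := - col ord0 (P0 R n).
have hu0 : normv u0 = 1.
  by rewrite /normv /u0 dotvNl dotvC dotvNl opprK col_dot // eqxx sqrtr1.
have hs0 : sup (S u0) = ga.
  have hga0 : 0 < ga by rewrite ega; apply: mulr_gt0 => //; lra.
  have vals : forall j, dotv (col j (Pdelta n d)) u0 = if j == ord0 then -1 else ga.
    move=> j; rewrite /u0 dotvC dotvNl dotvC Pd_dot //.
    case: eqP => [_|nj]; first by rewrite col_dot // eqxx.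
    rewrite !col_dot // eqxx; have -> : (j == ord0) = false by apply/eqP.
    by rewrite ega; field; nz.
  apply/eqP; rewrite eq_le; apply/andP; split.
    apply: ge_sup; first by case: (Pd_hassup _ _ _ u0 n2 hd hdn).
    move=> c /(Pd_S _ _ _ _ _ n2 hd hdn) [j ->]; rewrite vals.
    by case: eqP => _ //; lra.
  apply: sup_upper_bound; first exact: Pd_hassup.
  apply/(Pd_S _ _ _ _ _ n2 hd hdn); exists ord_max.
  rewrite vals; have -> : (ord_max == ord0 :> 'I_n.+1) = false.
    by apply/negbTE; rewrite -lt0n.
  done.
rewrite /cosmeasure.
apply/eqP; rewrite eq_le; apply/andP; split.
  apply: ge_inf; first by exists ga => m [u [hu ->]]; apply: lower.
  by exists u0; split => //; rewrite hs0.
apply: lb_le_inf; first by exists ga, u0; split => //; rewrite hs0.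
by move=> m [u [hu ->]]; apply: lower.
Qed.

Local Close Scope classical_set_scope.

Theorem theorem13 (R : realType) (n : nat) (delta : R) :
  (2 <= n)%N -> 0 <= delta -> delta < 1 / n%:R ->
  positive_basis (cols (Pdelta n delta)) /\
  cosmeasure (cols (Pdelta n delta)) =
    (1 - delta * n%:R) /
      Num.sqrt (n%:R ^+ 2 * delta ^+ 2 - 2 * n%:R * delta + n%:R ^+ 2).
Proof.
move=> n2 hd hdn; split; first split.
- exact: Pd_span.
- exact: Pd_indep.
- exact: Pd_cm.
Qed.
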